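(* Let $G$ be a group acting faithfully by homeomorphisms on an infinite Hausdorff space $\mathcal{X}$. Suppose that $U$ is an open subset of $\mathcal{X}$ such that its $R_U$-orbit is equal to its $G$-orbit and is a basis of the topology of $\mathcal{X}$. Then $R_U$ is simple and is contained in every non-trivial normal subgroup of $G$.
   Context: For an open $U\subset\mathcal{X}$, $G_{(U)}$ denotes the subgroup of elements of $G$ acting trivially on $\mathcal{X}\setminus U$, and $R_U$ denotes the normal closure in $G$ of the derived subgroup $G_{(U)}'=[G_{(U)},G_{(U)}]$. The $H$-orbit of $U$ for a subgroup $H$ is $\{hU: h\in H\}$. *)

(* Defs.v *)
From Stdlib Require Import List.

Set Implicit Arguments.

Definition subset {T : Type} (A B : T -> Prop) : Prop := forall x, A x -> B x.
Definition set_eq {T : Type} (A B : T -> Prop) : Prop := forall x, A x <-> B x.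

Record Topology (X : Type) := {
  is_open : (X -> Prop) -> Prop;
  open_full : is_open (fun _ => True);
  open_empty : is_open (fun _ => False);
  open_inter : forall A B, is_open A -> is_open B -> is_open (fun x => A x /\ B x);
  open_union : forall (F : (X -> Prop) -> Prop),
      (forall A, F A -> is_open A) -> is_open (fun x => exists A, F A /\ A x);
  open_ext : forall A B, set_eq A B -> is_open A -> is_open B
}.

Definition hausdorff {X : Type} (T : Topology X) : Prop :=
  forall x y : X, x <> y ->
    exists U V, is_open T U /\ is_open T V /\ U x /\ V y /\
                (forall z, U z -> V z -> False).

Definition infinite_type (X : Type) : Prop :=
  forall l : list X, exists x, ~ In x l.

Definition continuous {X : Type} (T : Topology X) (f : X -> X) : Prop :=
  forall U, is_open T U -> is_open T (fun x => U (f x)).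

Definition homeomorphism {X : Type} (T : Topology X) (f : X -> X) : Prop :=
  continuous T f /\
  exists g : X -> X, continuous T g /\ (forall x, g (f x) = x) /\ (forall x, f (g x) = x).

Definition is_basis {X : Type} (T : Topology X) (B : (X -> Prop) -> Prop) : Prop :=
  (forall V, B V -> is_open T V) /\
  (forall W, is_open T W -> forall x, W x -> exists V, B V /\ V x /\ subset V W).

Record Group := {
  gcar :> Type;
  gmul : gcar -> gcar -> gcar;
  ginv : gcar -> gcar;
  gone : gcar;
  gmulA : forall a b c, gmul a (gmul b c) = gmul (gmul a b) c;
  gmul1l : forall a, gmul gone a = a;
  gmul1r : forall a, gmul a gone = a;
  gmulVl : forall a, gmul (ginv a) a = gone;
  gmulVr : forall a, gmul a (ginv a) = gone
}.

Section GroupDefs.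
Variable G : Group.

Definition comm (a b : G) : G :=
  gmul G (gmul G (ginv G a) (ginv G b)) (gmul G a b).

Definition conj (h g : G) : G := gmul G (gmul G h g) (ginv G h).

Definition is_subgroup (H : G -> Prop) : Prop :=
  H (gone G) /\ (forall a b, H a -> H b -> H (gmul G a b)) /\ (forall a, H a -> H (ginv G a)).

Inductive gen (S : G -> Prop) : G -> Prop :=
| gen_base : forall g, S g -> gen S g
| gen_one : gen S (gone G)
| gen_mul : forall a b, gen S a -> gen S b -> gen S (gmul G a b)
| gen_inv : forall a, gen S a -> gen S (ginv G a).

Definition derived (H : G -> Prop) : G -> Prop :=
  gen (fun g => exists a b, H a /\ H b /\ g = comm a b).

Definition normal_closure (S : G -> Prop) : G -> Prop :=
  gen (fun g => exists h s, S s /\ g = conj h s).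

Definition normal_in (N K : G -> Prop) : Prop :=
  is_subgroup N /\ subset N K /\ (forall k n, K k -> N n -> N (conj k n)).

Definition trivial_sub (N : G -> Prop) : Prop := forall n, N n -> n = gone G.

Definition simple_sub (K : G -> Prop) : Prop :=
  is_subgroup K /\ ~ trivial_sub K /\
  (forall N, normal_in N K -> trivial_sub N \/ subset K N).

End GroupDefs.

Definition is_action (G : Group) (X : Type) (act : G -> X -> X) : Prop :=
  (forall x, act (gone G) x = x) /\
  (forall g h x, act (gmul G g h) x = act g (act h x)).

Definition faithful (G : Group) (X : Type) (act : G -> X -> X) : Prop :=
  forall g, (forall x, act g x = x) -> g = gone G.

Definition img (G : Group) (X : Type) (act : G -> X -> X) (g : G) (U : X -> Prop) : X -> Prop :=
  fun x => exists y, U y /\ x = act g y.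

Definition orbit (G : Group) (X : Type) (act : G -> X -> X) (H : G -> Prop)
  (U : X -> Prop) : (X -> Prop) -> Prop :=
  fun V => exists h, H h /\ set_eq V (@img G X act h U).

Definition rigid (G : Group) (X : Type) (act : G -> X -> X) (U : X -> Prop) : G -> Prop :=
  fun g => forall x, ~ U x -> act g x = x.

Definition R_ (G : Group) (X : Type) (act : G -> X -> X) (U : X -> Prop) : G -> Prop :=
  @normal_closure G (@derived G (@rigid G X act U)).

Arguments is_action {G X} act.
Arguments faithful {G X} act.
Arguments img {G X} act g U _.
Arguments orbit {G X} act H U _.
Arguments rigid {G X} act U _.
Arguments R_ {G X} act U _.
Arguments simple_sub {G} K.
Arguments normal_in {G} N K.
Arguments trivial_sub {G} N.

(* Main.v *)
Require Import Defs.
From Stdlib Require Import List Classical.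
Set Implicit Arguments.

Lemma ginvK (G : Group) (g : G) : ginv G (ginv G g) = g.
Proof.
  rewrite <- (gmul1r G (ginv G (ginv G g))).
  rewrite <- (gmulVl G g).
  rewrite gmulA, gmulVl. apply gmul1l.
Qed.

Lemma act_mul (G : Group) (X : Type) (act : G -> X -> X) (Hact : is_action act) g h x :
  act (gmul G g h) x = act g (act h x).
Proof. apply (proj2 Hact). Qed.

Lemma act_one (G : Group) (X : Type) (act : G -> X -> X) (Hact : is_action act) x :
  act (gone G) x = x.
Proof. apply (proj1 Hact). Qed.

Lemma act_inv_r (G : Group) (X : Type) (act : G -> X -> X) (Hact : is_action act) g x :
  act g (act (ginv G g) x) = x.
Proof. rewrite <- (act_mul Hact), gmulVr. apply (act_one Hact). Qed.

Lemma act_inv_l (G : Group) (X : Type) (act : G -> X -> X) (Hact : is_action act) g x :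
  act (ginv G g) (act g x) = x.
Proof. rewrite <- (act_mul Hact), gmulVl. apply (act_one Hact). Qed.

Lemma act_invinv (G : Group) (X : Type) (act : G -> X -> X) g x :
  act (ginv G (ginv G g)) x = act g x.
Proof. rewrite ginvK. reflexivity. Qed.

Lemma eq_of_act (G : Group) (X : Type) (act : G -> X -> X) (Hact : is_action act)
  (Hf : faithful act) g h : (forall x, act g x = act h x) -> g = h.
Proof.
  intro E. assert (E1 : gmul G g (ginv G h) = gone G).
  { apply Hf. intro x. rewrite (act_mul Hact), E, (act_inv_r Hact). reflexivity. }
  rewrite <- (gmul1l G h), <- E1, <- gmulA, gmulVl, gmul1r. reflexivity.
Qed.

Lemma inv_uniq (G : Group) (X : Type) (act : G -> X -> X) (Hact : is_action act)
  (Hf : faithful act) g h : (forall y, act g (act h y) = y) -> ginv G g = h.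
Proof.
  intro E. apply (eq_of_act Hact Hf). intro y.
  rewrite <- (E y) at 1. apply (act_inv_l Hact).
Qed.

Ltac gsimp Hact := repeat (rewrite ?(act_mul Hact), ?act_invinv, ?(act_inv_l Hact), ?(act_inv_r Hact), ?(act_one Hact)).

Lemma invMg (G : Group) (X : Type) (act : G -> X -> X) (Hact : is_action act)
  (Hf : faithful act) a b : ginv G (gmul G a b) = gmul G (ginv G b) (ginv G a).
Proof. apply (inv_uniq Hact Hf). intro y. gsimp Hact. reflexivity. Qed.

Lemma rigid_pres (G : Group) (X : Type) (act : G -> X -> X) (Hact : is_action act)
  V g x : rigid act V g -> V x -> V (act g x).
Proof.
  intros Hg Vx. destruct (classic (V (act g x))) as [h|h]; auto.
  exfalso. apply h. pose proof (Hg _ h) as E.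
  assert (act g x = x) as E2.
  { rewrite <- (act_inv_l Hact g (act g x)), E, (act_inv_l Hact). reflexivity. }
  rewrite E2. exact Vx.
Qed.

Lemma rigid_inv (G : Group) (X : Type) (act : G -> X -> X) (Hact : is_action act)
  V g : rigid act V g -> rigid act V (ginv G g).
Proof.
  intros Hg x nx. rewrite <- (Hg x nx) at 1. apply (act_inv_l Hact).
Qed.

Lemma rigid_mul (G : Group) (X : Type) (act : G -> X -> X) (Hact : is_action act)
  V g h : rigid act V g -> rigid act V h -> rigid act V (gmul G g h).
Proof. intros Hg Hh x nx. rewrite (act_mul Hact), Hh, Hg; auto. Qed.

Lemma rigid_one (G : Group) (X : Type) (act : G -> X -> X) (Hact : is_action act)
  V : rigid act V (gone G).
Proof. intros x _. apply (act_one Hact). Qed.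

Lemma rigid_comm (G : Group) (X : Type) (act : G -> X -> X) (Hact : is_action act)
  V a b : rigid act V a -> rigid act V b -> rigid act V (comm G a b).
Proof.
  intros Ha Hb. unfold comm.
  repeat apply (rigid_mul Hact); try apply (rigid_inv Hact); auto.
Qed.

Lemma rigid_sub (G : Group) (X : Type) (act : G -> X -> X) (V W : X -> Prop) g :
  subset V W -> rigid act V g -> rigid act W g.
Proof. intros S Hg x nx. apply Hg. intro v. apply nx, S, v. Qed.

Lemma derived_rigid (G : Group) (X : Type) (act : G -> X -> X) (Hact : is_action act)
  V g : derived G (rigid act V) g -> rigid act V g.
Proof.
  induction 1 as [g [a [b [Ha [Hb ->]]]]| | | ].
  - apply (rigid_comm Hact); auto.
  - apply (rigid_one Hact).
  - apply (rigid_mul Hact); auto.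
  - apply (rigid_inv Hact); auto.
Qed.

Lemma pc (G : Group) (X : Type) (act : G -> X -> X) (Hact : is_action act)
  (A B : X -> Prop) a b : rigid act A a -> rigid act B b ->
  (forall x, A x -> B x -> False) -> forall x, act a (act b x) = act b (act a x).
Proof.
  intros Ha Hb D x.
  destruct (classic (A x)) as [Ax|nAx].
  - assert (nB : ~ B x) by (intro; eauto).
    assert (nB' : ~ B (act a x)) by (intro h; apply (D (act a x)); [apply (rigid_pres Hact); assumption | exact h]).
    rewrite (Hb x nB), (Hb _ nB'). reflexivity.
  - destruct (classic (B x)) as [Bx|nBx].
    + assert (nA' : ~ A (act b x)) by (intro h; apply (D (act b x)); [exact h | apply (rigid_pres Hact); assumption]).
      rewrite (Ha x nAx), (Ha _ nA'). reflexivity.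
    + rewrite (Ha x nAx), (Hb x nBx), (Ha x nAx). reflexivity.
Qed.

Lemma gcommute (G : Group) (X : Type) (act : G -> X -> X) (Hact : is_action act)
  (Hf : faithful act) (A B : X -> Prop) a b : rigid act A a -> rigid act B b ->
  (forall x, A x -> B x -> False) -> gmul G a b = gmul G b a.
Proof.
  intros Ha Hb D. apply (eq_of_act Hact Hf). intro x. rewrite !(act_mul Hact).
  eapply pc; eauto.
Qed.

Lemma comm_reduce (G : Group) (X : Type) (act : G -> X -> X) (Hact : is_action act)
  (Hf : faithful act) (A B C : X -> Prop) p1 p2 q1 q2 :
  rigid act A p1 -> rigid act B p2 -> rigid act A q1 -> rigid act C q2 ->
  (forall x, A x -> B x -> False) -> (forall x, A x -> C x -> False) ->
  (forall x, B x -> C x -> False) ->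
  comm G (gmul G p1 p2) (gmul G q1 q2) = comm G p1 q1.
Proof.
  intros Hp1 Hp2 Hq1 Hq2 DAB DAC DBC.
  assert (DBA : forall x, B x -> A x -> False) by eauto.
  assert (DCA : forall x, C x -> A x -> False) by eauto.
  apply (eq_of_act Hact Hf). intro y. unfold comm.
  rewrite !(invMg Hact Hf). rewrite !(act_mul Hact).
  rewrite (pc Hact Hp2 Hq1 DBA (act q2 y)).
  rewrite (pc Hact Hp2 Hq2 DBC y).
  rewrite (pc Hact Hq1 Hq2 DAC (act p2 y)).
  rewrite (pc Hact Hp1 Hq2 DAC (act q1 (act p2 y))).
  rewrite (pc Hact (rigid_inv Hact Hq1) Hq2 DAC).
  rewrite (act_inv_l Hact).
  rewrite (pc Hact Hq1 Hp2 DAB y).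
  rewrite (pc Hact Hp1 Hp2 DAB).
  rewrite (pc Hact (rigid_inv Hact Hq1) Hp2 DAB).
  rewrite (pc Hact (rigid_inv Hact Hp1) Hp2 DAB).
  rewrite (act_inv_l Hact). reflexivity.
Qed.

Lemma img_char (G : Group) (X : Type) (act : G -> X -> X) (Hact : is_action act)
  g (U : X -> Prop) x : img act g U x <-> U (act (ginv G g) x).
Proof.
  split.
  - intros [y [Uy ->]]. rewrite (act_inv_l Hact). exact Uy.
  - intro h. exists (act (ginv G g) x). split; auto. rewrite (act_inv_r Hact). reflexivity.
Qed.

Lemma conj_comm (G : Group) (X : Type) (act : G -> X -> X) (Hact : is_action act)
  (Hf : faithful act) g a b : conj G g (comm G a b) = comm G (conj G g a) (conj G g b).
Proof.
  unfold conj, comm. rewrite !(invMg Hact Hf), !ginvK. apply (eq_of_act Hact Hf).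
  intro y. gsimp Hact. reflexivity.
Qed.

Lemma conj_one (G : Group) (X : Type) (act : G -> X -> X) (Hact : is_action act)
  (Hf : faithful act) g : conj G g (gone G) = gone G.
Proof.
  unfold conj. apply (eq_of_act Hact Hf). intro y. gsimp Hact.
  reflexivity.
Qed.

Lemma conj_mul (G : Group) (X : Type) (act : G -> X -> X) (Hact : is_action act)
  (Hf : faithful act) g a b : conj G g (gmul G a b) = gmul G (conj G g a) (conj G g b).
Proof.
  unfold conj. apply (eq_of_act Hact Hf). intro y. gsimp Hact. reflexivity.
Qed.

Lemma conj_inv (G : Group) (X : Type) (act : G -> X -> X) (Hact : is_action act)
  (Hf : faithful act) g a : conj G g (ginv G a) = ginv G (conj G g a).
Proof.
  unfold conj. rewrite !(invMg Hact Hf), !ginvK. apply (eq_of_act Hact Hf). intro y. gsimp Hact. reflexivity.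
Qed.

Lemma conj_conj (G : Group) (X : Type) (act : G -> X -> X) (Hact : is_action act)
  (Hf : faithful act) g h a : conj G g (conj G h a) = conj G (gmul G g h) a.
Proof.
  unfold conj. rewrite !(invMg Hact Hf). apply (eq_of_act Hact Hf). intro y. gsimp Hact. reflexivity.
Qed.

Lemma conj_Vconj (G : Group) (X : Type) (act : G -> X -> X) (Hact : is_action act)
  (Hf : faithful act) g a : conj G (ginv G g) (conj G g a) = a.
Proof.
  unfold conj. apply (eq_of_act Hact Hf). intro y. gsimp Hact. reflexivity.
Qed.

Lemma rigid_transfer (G : Group) (X : Type) (act : G -> X -> X) (Hact : is_action act)
  (A B : X -> Prop) g a : (forall x, B x <-> A (act (ginv G g) x)) ->
  rigid act A a -> rigid act B (conj G g a).
Proof.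
  intros HB Ha x nx. unfold conj. rewrite !(act_mul Hact).
  rewrite Ha. apply (act_inv_r Hact). intro h. apply nx, HB, h.
Qed.

Lemma derived_transfer (G : Group) (X : Type) (act : G -> X -> X) (Hact : is_action act)
  (Hf : faithful act) (A B : X -> Prop) g s : (forall x, B x <-> A (act (ginv G g) x)) ->
  derived G (rigid act A) s -> derived G (rigid act B) (conj G g s).
Proof.
  intros HB. induction 1 as [s [a [b [Ha [Hb ->]]]]| | | ].
  - rewrite (conj_comm Hact Hf). apply gen_base. do 2 eexists. split; [|split; [|reflexivity]];
    eapply (rigid_transfer Hact); eauto.
  - rewrite (conj_one Hact Hf). apply gen_one.
  - rewrite (conj_mul Hact Hf). apply gen_mul; auto.
  - rewrite (conj_inv Hact Hf). apply gen_inv; auto.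
Qed.

Lemma lemL (G : Group) (X : Type) (act : G -> X -> X) (Hact : is_action act)
  (Hf : faithful act) (K N : G -> Prop) (W : X -> Prop) n a b :
  is_subgroup G N -> (forall k m, K k -> N m -> N (conj G k m)) ->
  (forall k, K k -> K (ginv G k)) -> N n -> K a -> K b ->
  rigid act W a -> rigid act W b -> (forall x, W x -> W (act n x) -> False) ->
  N (comm G (ginv G a) b).
Proof.
  intros [N1 [Nm Ni]] Nc Ki Nn Ka Kb Ha Hb D.
  set (d := gmul G (gmul G (ginv G n) a) n).
  assert (Ec : comm G a n = gmul G (ginv G a) d).
  { apply (eq_of_act Hact Hf). intro y. unfold comm, d. gsimp Hact. reflexivity. }
  assert (Nc1 : N (comm G a n)).
  { replace (comm G a n) with (gmul G (conj G (ginv G a) (ginv G n)) n).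
    - apply Nm; auto.
    - apply (eq_of_act Hact Hf). intro y. unfold comm, conj. gsimp Hact. reflexivity. }
  assert (N2 : N (comm G (comm G a n) b)).
  { set (c := comm G a n) in *.
    replace (comm G c b) with (gmul G (ginv G c) (conj G (ginv G b) c)).
    - apply Nm; auto.
    - apply (eq_of_act Hact Hf). intro y. unfold conj. unfold comm at 1. gsimp Hact. reflexivity. }
  assert (Rd : rigid act (fun x => W (act n x)) d).
  { intros x nx. unfold d. rewrite !(act_mul Hact). rewrite (Ha _ nx). apply (act_inv_l Hact). }
  assert (E : comm G (comm G a n) b = comm G (ginv G a) b).
  { rewrite Ec. transitivity (comm G (gmul G (ginv G a) d) (gmul G b (gone G))).
    - rewrite gmul1r. reflexivity.
    - apply (comm_reduce Hact Hf (A:=W) (B:=fun x => W (act n x)) (C:=fun _ => False)); auto.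
      + apply (rigid_inv Hact); auto.
      + apply (rigid_one Hact). }
  rewrite <- E. exact N2.
Qed.

Lemma lemM (G : Group) (X : Type) (act : G -> X -> X) (Hact : is_action act)
  (Hf : faithful act) (U : X -> Prop) (K N : G -> Prop) V0 :
  is_subgroup G N -> (forall k m, K k -> N m -> N (conj G k m)) ->
  (forall k, K k -> K (ginv G k)) ->
  (forall V, orbit act (fun _ => True) U V -> orbit act K U V) ->
  orbit act K U V0 -> subset (derived G (rigid act V0)) N ->
  subset (R_ act U) N.
Proof.
  intros [N1 [Nm Ni]] Nc Ki Horb [r [Kr Er]] Hsub.
  assert (S1 : forall s, derived G (rigid act U) s -> N s).
  { intros s Hs. rewrite <- (conj_Vconj Hact Hf r s). apply Nc; [auto|].
    apply Hsub. eapply (derived_transfer Hact Hf); [|exact Hs].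
    intro x. rewrite (Er x). apply (img_char Hact). }
  intros g Hg. unfold R_, normal_closure in Hg.
  induction Hg as [g [h [s [Hs ->]]]| | | ]; auto.
  destruct (Horb (img act h U)) as [r' [Kr' Er']].
  { exists h. split; [exact I| intro; reflexivity]. }
  assert (E : conj G h s = conj G r' (conj G (gmul G (ginv G r') h) s)).
  { rewrite (conj_conj Hact Hf). rewrite gmulA, gmulVr, gmul1l. reflexivity. }
  rewrite E. apply Nc; auto. apply S1. eapply (derived_transfer Hact Hf); [|exact Hs].
  intro x. rewrite (invMg Hact Hf), (act_mul Hact), act_invinv.
  rewrite <- (img_char Hact), (Er' _), (img_char Hact), (act_inv_l Hact). reflexivity.
Qed.

Lemma double_trick (G : Group) (X : Type) (act : G -> X -> X) (Hact : is_action act)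
  (Hf : faithful act) (V : X -> Prop) a b s t :
  rigid act V a -> rigid act V b ->
  (forall x, V x -> V (act (ginv G s) x) -> False) ->
  (forall x, V x -> V (act (ginv G t) x) -> False) ->
  (forall x, V (act (ginv G s) x) -> V (act (ginv G t) x) -> False) ->
  comm G (ginv G (comm G (ginv G a) (ginv G s))) (comm G (ginv G b) (ginv G t))
  = comm G (ginv G a) b.
Proof.
  intros Ha Hb D1 D2 D3.
  set (p2 := gmul G (gmul G s a) (ginv G s)).
  set (q2 := gmul G (gmul G t (ginv G b)) (ginv G t)).
  assert (R2 : rigid act (fun x => V (act (ginv G s) x)) p2).
  { intros x nx. unfold p2. rewrite !(act_mul Hact). rewrite (Ha _ nx). apply (act_inv_r Hact). }
  assert (R2' : rigid act (fun x => V (act (ginv G t) x)) q2).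
  { intros x nx. unfold q2. rewrite !(act_mul Hact). rewrite (rigid_inv Hact Hb _ nx). apply (act_inv_r Hact). }
  assert (E1 : ginv G (comm G (ginv G a) (ginv G s)) = gmul G (ginv G a) p2).
  { transitivity (gmul G p2 (ginv G a)).
    - apply (inv_uniq Hact Hf). intro y. unfold comm, p2. gsimp Hact. reflexivity.
    - apply (gcommute Hact Hf R2 (rigid_inv Hact Ha)). intros x h1 h2. eapply D1; eauto. }
  assert (E2 : comm G (ginv G b) (ginv G t) = gmul G b q2).
  { apply (eq_of_act Hact Hf). intro y. unfold comm, q2. gsimp Hact. reflexivity. }
  rewrite E1, E2.
  apply (comm_reduce Hact Hf (A:=V) (B:=fun x => V (act (ginv G s) x)) (C:=fun x => V (act (ginv G t) x))); auto.
  apply (rigid_inv Hact); auto.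
Qed.

Lemma small (G : Group) (X : Type) (T : Topology X) (act : G -> X -> X)
  (Hhomeo : forall g : G, homeomorphism T (act g)) (Hhaus : hausdorff T) (U : X -> Prop)
  (Hbasis : is_basis T (orbit act (fun _ => True) U)) (c : G) y (Om : X -> Prop) :
  is_open T Om -> Om y -> act c y <> y ->
  exists W, orbit act (fun _ => True) U W /\ W y /\ subset W Om /\
    (forall x, W x -> W (act c x) -> False).
Proof.
  intros HO Oy Hm.
  destruct (Hhaus y (act c y)) as [P [Q [HP [HQ [Py [Qy D]]]]]].
  { intro e; apply Hm; symmetry; exact e. }
  assert (HO' : is_open T (fun x => Om x /\ (P x /\ Q (act c x)))).
  { apply open_inter; auto. apply open_inter; auto. apply (proj1 (Hhomeo c)); auto. }
  destruct (proj2 Hbasis _ HO' y (Logic.conj Oy (Logic.conj Py Qy))) as [W [HW [Wy SW]]].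
  exists W. repeat split; auto.
  - intros x Wx. apply (SW x Wx).
  - intros x Wx Wcx. destruct (SW x Wx) as [_ [_ Qx]]. destruct (SW _ Wcx) as [_ [Px _]].
    eapply D; eauto.
Qed.

Lemma R_nontriv (G : Group) (X : Type) (T : Topology X) (act : G -> X -> X)
  (Hact : is_action act) (Hinf : infinite_type X) (Hhaus : hausdorff T) (U : X -> Prop)
  (Horb : forall V, orbit act (R_ act U) U V <-> orbit act (fun _ => True) U V)
  (Hbasis : is_basis T (orbit act (fun _ => True) U)) : ~ trivial_sub (R_ act U).
Proof.
  intro Htr.
  destruct (Hinf nil) as [x0 _]. destruct (Hinf (x0 :: nil)) as [y0 Hy0].
  assert (Hne : x0 <> y0) by (intro e; apply Hy0; left; exact e).
  destruct (Hhaus _ _ Hne) as [P [Q [HP [HQ [Px [Qy D]]]]]].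
  assert (key : forall V, orbit act (fun _ => True) U V -> forall x, V x <-> U x).
  { intros V HV x. apply Horb in HV. destruct HV as [r [Rr Er]].
    pose proof (Htr r Rr) as e. subst r.
    rewrite (Er x). split.
    - intros [z [Uz ->]]. rewrite (act_one Hact). exact Uz.
    - intro Ux. exists x. split; [exact Ux| symmetry; apply (act_one Hact)]. }
  destruct (proj2 Hbasis _ HP x0 Px) as [V1 [HV1 [V1x S1]]].
  destruct (proj2 Hbasis _ HQ y0 Qy) as [V2 [HV2 [V2y S2]]].
  apply (D y0).
  - apply S1. apply (key V1 HV1). apply (key V2 HV2). exact V2y.
  - apply S2, V2y.
Qed.

Lemma moved (G : Group) (X : Type) (act : G -> X -> X) (Hf : faithful act) n :
  n <> gone G -> exists x, act n x <> x.
Proof.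
  intro ne. apply NNPP. intro H. apply ne, Hf. intro x. apply NNPP. intro h. apply H. eauto.
Qed.

Lemma derived_nontriv (G : Group) (X : Type) (act : G -> X -> X) (Hact : is_action act)
  (Hf : faithful act) (U : X -> Prop) :
  ~ trivial_sub (R_ act U) -> exists s, derived G (rigid act U) s /\ s <> gone G.
Proof.
  intro Hnt. apply NNPP. intro H. apply Hnt. intros g Hg. unfold R_, normal_closure in Hg.
  induction Hg as [g [h [s [Hs ->]]]| | | ].
  - assert (s = gone G) by (apply NNPP; intro ne; apply H; eauto). subst s.
    apply (conj_one Hact Hf).
  - reflexivity.
  - rewrite IHHg1, IHHg2. apply gmul1l.
  - rewrite IHHg. rewrite <- (gmul1l G (ginv G (gone G))). apply gmulVr.
Qed.

Lemma orbit_derived_nontriv (G : Group) (X : Type) (act : G -> X -> X) (Hact : is_action act)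
  (Hf : faithful act) (U W : X -> Prop) :
  ~ trivial_sub (R_ act U) -> orbit act (fun _ => True) U W ->
  exists c, derived G (rigid act W) c /\ c <> gone G.
Proof.
  intros Hnt [g [_ Eg]]. destruct (derived_nontriv Hact Hf Hnt) as [s [Hs ne]].
  exists (conj G g s). split.
  - eapply (derived_transfer Hact Hf); [|exact Hs]. intro x. rewrite (Eg x). apply (img_char Hact).
  - intro e. apply ne. rewrite <- (conj_Vconj Hact Hf g s), e. apply (conj_one Hact Hf).
Qed.

Lemma derived_in_R (G : Group) (X : Type) (act : G -> X -> X) (Hact : is_action act)
  (Hf : faithful act) (U W : X -> Prop) s :
  orbit act (fun _ => True) U W -> derived G (rigid act W) s -> R_ act U s.
Proof.
  intros [g [_ Eg]] Hs.
  rewrite <- (conj_Vconj Hact Hf (ginv G g) s), ginvK.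
  apply gen_base. exists g, (conj G (ginv G g) s). split; [|reflexivity].
  eapply (derived_transfer Hact Hf); [|exact Hs]. intro x.
  rewrite act_invinv, (Eg _), (img_char Hact), (act_inv_l Hact). reflexivity.
Qed.

Lemma in_orbit_moved (G : Group) (X : Type) (act : G -> X -> X) (Hact : is_action act)
  (W : X -> Prop) c y : derived G (rigid act W) c -> act c y <> y -> W y.
Proof.
  intros Hc Hy. apply NNPP. intro nW. apply Hy. apply (derived_rigid Hact Hc). exact nW.
Qed.

Theorem proposition4p3 (X : Type) (T : Topology X) (G : Group) (act : G -> X -> X)
  (Hact : is_action act) (Hfaith : faithful act)
  (Hhomeo : forall g : G, homeomorphism T (act g))
  (Hinf : infinite_type X) (Hhaus : hausdorff T)
  (U : X -> Prop) (HUopen : is_open T U)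
  (Horb : forall V, orbit act (R_ act U) U V <-> orbit act (fun _ => True) U V)
  (Hbasis : is_basis T (orbit act (fun _ => True) U)) :
  simple_sub (R_ act U) /\
  (forall N : G -> Prop, normal_in N (fun _ => True) -> ~ trivial_sub N ->
     subset (R_ act U) N).
Proof.
  assert (Hnt := R_nontriv Hact Hinf Hhaus Horb Hbasis).
  assert (Rsub : is_subgroup G (R_ act U)).
  { split; [apply gen_one | split; [apply gen_mul | apply gen_inv]]. }
  assert (getn : forall N : G -> Prop, ~ trivial_sub N -> exists n, N n /\ n <> gone G).
  { intros N Hn. apply NNPP. intro H. apply Hn. intros n Nn. apply NNPP. intro ne. apply H; eauto. }
  split.
  - split; [exact Rsub | split; [exact Hnt |]].
    intros N [NS [NR Nc]].
    destruct (classic (trivial_sub N)) as [|Hn]; [left; auto | right].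
    destruct (getn N Hn) as [n [Nn nne]].
    destruct (moved Hfaith nne) as [x Hx].
    destruct (small Hhomeo Hhaus Hbasis n _ (open_full T) I Hx) as [W [HW [Wx [_ DW]]]].
    destruct (orbit_derived_nontriv Hact Hfaith Hnt HW) as [c [Hc cne]].
    destruct (moved Hfaith cne) as [y Hy].
    pose proof (in_orbit_moved Hact Hc Hy) as Wy.
    destruct (small Hhomeo Hhaus Hbasis c _ (proj1 Hbasis W HW) Wy Hy)
      as [W1 [HW1 [W1y [SW1 D1]]]].
    destruct (orbit_derived_nontriv Hact Hfaith Hnt HW1) as [d [Hd dne]].
    destruct (moved Hfaith dne) as [z Hz].
    pose proof (in_orbit_moved Hact Hd Hz) as W1z.
    destruct (small Hhomeo Hhaus Hbasis d _ (proj1 Hbasis W1 HW1) W1z Hz)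
      as [W2 [HW2 [W2z [SW2 D2]]]].
    assert (Rc : rigid act W c) by (apply (derived_rigid Hact Hc)).
    assert (Rd : rigid act W1 d) by (apply (derived_rigid Hact Hd)).
    assert (SW : subset W2 W) by (intros w h; apply SW1, SW2, h).
    apply (lemM Hact Hfaith (K:=R_ act U) (N:=N) (V0:=W2)); auto.
    + intros k Kk. apply gen_inv; exact Kk.
    + intros V HV. apply Horb; exact HV.
    + apply Horb; exact HW2.
    + intros g Hg. induction Hg as [g [a0 [b0 [Ha0 [Hb0 ->]]]]| | | ].
      * rewrite <- (ginvK G a0).
        rewrite <- (double_trick Hact Hfaith (V:=W2) (a:=ginv G a0) (b:=b0) (ginv G c) (ginv G d)).
        -- assert (Ka : derived G (rigid act W) (comm G (ginv G (ginv G a0)) (ginv G (ginv G c)))).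
           { apply gen_base. do 2 eexists. split; [|split; [|reflexivity]];
             apply (rigid_inv Hact); [apply (rigid_sub SW); apply (rigid_inv Hact); exact Ha0 | apply (rigid_inv Hact); exact Rc]. }
           assert (Kb : derived G (rigid act W) (comm G (ginv G b0) (ginv G (ginv G d)))).
           { apply gen_base. do 2 eexists. split; [|split; [|reflexivity]];
             apply (rigid_inv Hact); [apply (rigid_sub SW); exact Hb0 |
               apply (rigid_inv Hact); apply (rigid_sub SW1); exact Rd]. }
           apply (lemL Hact Hfaith (R_ act U) (N:=N) (W:=W) n); auto.
           ++ intros k Kk. apply gen_inv; exact Kk.
           ++ apply (derived_in_R Hact Hfaith HW Ka).
           ++ apply (derived_in_R Hact Hfaith HW Kb).
           ++ apply (derived_rigid Hact Ka).
           ++ apply (derived_rigid Hact Kb).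
        -- apply (rigid_inv Hact); exact Ha0.
        -- exact Hb0.
        -- intros w h1 h2. rewrite act_invinv in h2. apply (D1 w); auto.
        -- intros w h1 h2. rewrite act_invinv in h2. apply (D2 w); auto.
        -- intros w h1 h2. rewrite act_invinv in h1, h2.
           assert (W1w : W1 w).
           { apply NNPP. intro nw. rewrite (Rd w nw) in h2. apply nw, SW2, h2. }
           apply (D1 w); auto.
      * apply (proj1 NS).
      * apply (proj1 (proj2 NS)); auto.
      * apply (proj2 (proj2 NS)); auto.
  - intros N [NS [_ Nc]] Hn.
    destruct (getn N Hn) as [n [Nn nne]].
    destruct (moved Hfaith nne) as [x Hx].
    destruct (small Hhomeo Hhaus Hbasis n _ (open_full T) I Hx) as [W [HW [Wx [_ DW]]]].
    apply (lemM Hact Hfaith (K:=fun _ => True) (N:=N) (V0:=W)); auto.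
    intros g Hg. induction Hg as [g [a0 [b0 [Ha0 [Hb0 ->]]]]| | | ].
    + rewrite <- (ginvK G a0).
      apply (lemL Hact Hfaith (fun _ => True) (N:=N) (W:=W) n); auto.
      apply (rigid_inv Hact); exact Ha0.
    + apply (proj1 NS).
    + apply (proj1 (proj2 NS)); auto.
    + apply (proj2 (proj2 NS)); auto.
Qed.
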